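(* Let $A\in\mathbb{R}^{r\times(r+1)}$ have full row rank $r$. Let $T$ be an ordered subset of $r$ elements of $\{1,\dots,r+1\}$ such that $\tilde A:=A[:,T]$ is nonsingular and minimizes $\|\tilde A^{-1}\|_1$ among all nonsingular $r\times r$ submatrices of $A$. Let $H\in\mathbb{R}^{(r+1)\times r}$ be the matrix whose rows indexed by $T$ are given by $\tilde A^{-1}$ and whose remaining row is zero. Then $H$ is an ah-symmetric reflexive generalized inverse of $A$ satisfying $\|H\|_1\le\frac{2r}{r+1}\|H_{opt}\|_1$, where $H_{opt}$ is an optimal solution of $\min\{\|H\|_1 : AH=I_r\}$ (which equals $\min\{\|H\|_1: AHA=A\}$ and $\min\{\|H\|_1 : AHA=A,\ HAH=H,\ (AH)^\top=AH\}$).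
   Context: $A[:,T]$ is the submatrix of $A$ formed by the columns indexed by $T$. $\|H\|_1=\sum_{i,j}|H_{ij}|$. $H$ is a generalized inverse of $A$ if $AHA=A$, reflexive if additionally $HAH=H$, and ah-symmetric if $AH$ is symmetric. *)

(* Defs.v *)
From HB Require Import structures.
From mathcomp Require Import all_boot all_order all_algebra.
Set Implicit Arguments. Unset Strict Implicit. Unset Printing Implicit Defensive.
Import Order.TTheory GRing.Theory Num.Theory.
Local Open Scope ring_scope.

Definition norm1 (R : numDomainType) (m n : nat) (H : 'M[R]_(m, n)) : R :=
  \sum_(i < m) \sum_(j < n) `|H i j|.

Definition colsubmx (R : Type) (m n r : nat) (t : 'I_r -> 'I_n)
  (A : 'M[R]_(m, n)) : 'M[R]_(m, r) := colsub t A.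

Definition embed_rows (R : pzRingType) (n r : nat) (t : 'I_r -> 'I_n)
  (X : 'M[R]_(r, r)) : 'M[R]_(n, r) :=
  \matrix_(k < n, j < r)
    match [pick i : 'I_r | t i == k] with Some i => X i j | None => 0 end.

(* Main.v *)
Require Import Defs.
From HB Require Import structures.
From mathcomp Require Import all_boot all_order all_algebra.
From mathcomp Require Import zify ring lra.
Import Order.TTheory GRing.Theory Num.Theory.
Local Open Scope ring_scope.
Lemma sum_reindex (R : nmodType) n r (t : 'I_r -> 'I_n) (f : 'I_n -> R) :
  injective t -> (forall l, (forall i, t i != l) -> f l = 0) ->
  \sum_l f l = \sum_i f (t i).
Proof.
move=> tinj f0.
rewrite (bigID (mem [set t x | x in [set: 'I_r]])) /=.
rewrite [X in _ + X]big1 ?addr0; last first.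
  move=> l lnot; apply: f0 => i; apply: contraNneq lnot => <-.
  by apply: imset_f; rewrite inE.
rewrite (big_imset _ (in2W tinj)) /=.
by apply: eq_bigl => i; rewrite inE.
Qed.

Arguments sum_reindex {R n r t f}.

Lemma miss_one r (t : 'I_r -> 'I_r.+1) : injective t ->
  exists k0, (forall i, t i != k0) /\ (forall l, l != k0 -> exists i, t i = l).
Proof.
move=> tinj.
have := cardsC [set t x | x in [set: 'I_r]].
rewrite card_imset // cardsT !card_ord => /eqP.
move=> /eqP E; have /cards1P [k0 Hk0] : #|~: [set t x | x in [set: 'I_r]]| == 1%N by apply/eqP; lia.
exists k0; split.
  move=> i; apply/eqP => e.
  have : k0 \in ~: [set t x | x in [set: 'I_r]] by rewrite Hk0 set11.
  by rewrite inE -e imset_f ?inE.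
move=> l lk0.
have : l \notin ~: [set t x | x in [set: 'I_r]] by rewrite Hk0 inE.
by rewrite inE negbK => /imsetP [i _ ->]; exists i.
Qed.
Arguments miss_one {r t}.

Lemma perk (R : realFieldType) (N W O w a : R) :
  3 <= N -> 0 <= a -> 0 <= O -> 0 < w -> 0 < W ->
  O * (N - 2) * w < N * a * (W - 2 * w) ->
  O * (N * N * w - 2 * W) < N * (N - 2) * W * a.
Proof.
move=> N3 a0 O0 w0 W0 h.
have hW : 0 < W - 2 * w.
  rewrite ltNge; apply/negP => hle.
  have : N * a * (W - 2 * w) <= 0.
    by rewrite -mulrA; apply: mulr_ge0_le0; [lra| apply: mulr_ge0_le0].
  have : 0 <= O * (N - 2) * w by apply: mulr_ge0; [apply: mulr_ge0 => //; lra | lra].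
  lra.
rewrite -(ltr_pM2r hW).
have h1 : (N - 2) * W * (O * (N - 2) * w) < (N - 2) * W * (N * a * (W - 2 * w)).
  by rewrite ltr_pM2l //; apply: mulr_gt0 => //; lra.
have h2 : 0 <= 2 * O * (N * w - W) ^+ 2.
  by apply: mulr_ge0; [lra | apply: sqr_ge0].
have e1 : (N - 2) * W * (O * (N - 2) * w) = O * (N * N * w - 2 * W) * (W - 2 * w) + 2 * O * (N * w - W) ^+ 2 by ring.
have e2 : (N - 2) * W * (N * a * (W - 2 * w)) = N * (N - 2) * W * a * (W - 2 * w) by ring.
lra.
Qed.

Lemma key (R : realFieldType) (n : nat) (w a : 'I_n -> R) :
  (2 <= n)%N -> (forall k, 0 <= w k) -> (forall k, 0 <= a k) ->
  0 < \sum_k w k ->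
  exists k, 0 < w k /\
    n%:R * a k * (\sum_i w i - 2 * w k) <= (n%:R - 2) * (\sum_i a i) * w k.
Proof.
move=> n2 w0 a0 W0.
set W := \sum_i w i in W0 *; set O := \sum_i a i.
have O0 : 0 <= O by apply: sumr_ge0.
case: (pickP (fun k => (0 < w k) &&
   (n%:R * a k * (W - 2 * w k) <= (n%:R - 2) * O * w k))) => [k /andP[]|hn].
  by exists k.
have hk : forall k, 0 < w k -> O * (n%:R - 2) * w k < n%:R * a k * (W - 2 * w k).
  move=> k wk; have := hn k; rewrite wk /= => /negbT; rewrite -ltNge.
  by move=> h; rewrite [O * _]mulrC.
have [k0 wk0] : exists k, 0 < w k.
  case: (pickP (fun k => 0 < w k)) => [k ?|hn0]; first by exists k.
  have : W <= 0.
    by apply: sumr_le0 => i _; have := hn0 i; rewrite ltNge => /negbFE.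
  lra.
case: (ltnP n 3) => hn3.
  have en : n = 2%N by lia.
  subst n.
  move: hn hk W0 k0 wk0; rewrite /W big_ord_recl big_ord1 => hn hk W0 k0 wk0.
  have el : lift ord0 ord0 = ord_max :> 'I_2 by apply/val_inj.
  rewrite el in hk W0.
  have [hle|hlt] := lerP (w ord0) (w ord_max).
    have wm : 0 < w ord_max by have := w0 ord0; lra.
    have h := hk ord_max wm.
    have : 2 * a ord_max * (w ord0 + w ord_max - 2 * w ord_max) <= 0.
      by rewrite -mulrA; apply: mulr_ge0_le0; [lra | apply: mulr_ge0_le0 => //; lra].
    have : 0 <= O * (2 - 2) * w ord_max by rewrite subrr mulr0 mul0r.
    lra.
  have wm : 0 < w ord0 by have := w0 ord_max; lra.
  have h := hk ord0 wm.
  have : 2 * a ord0 * (w ord0 + w ord_max - 2 * w ord0) <= 0.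
    by rewrite -mulrA; apply: mulr_ge0_le0; [lra | apply: mulr_ge0_le0 => //; lra].
  have : 0 <= O * (2 - 2) * w ord0 by rewrite subrr mulr0 mul0r.
  lra.
have N3 : 3 <= n%:R :> R by rewrite (ler_nat R 3 n).
set N := n%:R : R.
have hk' : forall k, O * (N * N * w k - 2 * W) <= N * (N - 2) * W * a k.
  move=> k; have [wk|] := ltrP 0 (w k).
    by apply/ltW/perk => //; apply: hk.
  move=> wk; have wk0' : w k = 0 by have := w0 k; lra.
  rewrite wk0' mulr0 add0r.
  have : 0 <= N * (N - 2) * W * a k.
    by apply: mulr_ge0 => //; apply: mulr_ge0; [apply: mulr_ge0|]; lra.
  have : 0 <= O * (2 * W) by apply: mulr_ge0 => //; lra.
  lra.
have hlt : \sum_k O * (N * N * w k - 2 * W) < \sum_k N * (N - 2) * W * a k.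
  rewrite (bigD1 k0) //= [X in _ < X](bigD1 k0) //=.
  apply: ltr_leD; first by apply: perk => //; first [apply: hk | lra].
  by apply: ler_sum => i _; apply: hk'.
move: hlt; rewrite -mulr_sumr -mulr_sumr sumrB -mulr_sumr sumr_const card_ord.
rewrite -/W -/O.
have : (2 * W) *+ n = N * (2 * W) by rewrite -mulr_natl.
move=> ->.
lra.
Qed.

Theorem theorem6p3 (R : realFieldType) (r : nat) (A : 'M[R]_(r, r.+1))
  (t : 'I_r -> 'I_(r.+1))
  (hrank : \rank A = r)
  (ht_inj : injective t)
  (hunit : colsubmx t A \in unitmx)
  (hmin : forall t' : 'I_r -> 'I_(r.+1), injective t' ->
            colsubmx t' A \in unitmx ->
            norm1 (invmx (colsubmx t A)) <= norm1 (invmx (colsubmx t' A))) :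
  let H := embed_rows t (invmx (colsubmx t A)) in
  [/\ A *m H *m A = A,
      H *m A *m H = H,
      (A *m H)^T = A *m H,
      (forall H' : 'M[R]_(r.+1, r), A *m H' = 1%:M ->
         norm1 H <= (2 * r)%:R / (r.+1)%:R * norm1 H')
    & (forall H' : 'M[R]_(r.+1, r), A *m H' *m A = A ->
         norm1 H <= (2 * r)%:R / (r.+1)%:R * norm1 H')].
Proof.
move=> H.
set X := invmx (colsubmx t A).
have HtE : forall i j, H (t i) j = X i j.
  move=> i j; rewrite /H /embed_rows mxE.
  by case: pickP => [i' /eqP /ht_inj -> | /(_ i)] //; rewrite eqxx.
have H0 : forall l, (forall i, t i != l) -> forall j, H l j = 0.
  move=> l hl j; rewrite /H /embed_rows mxE.
  by case: pickP => [i' /eqP e|] //; have := hl i'; rewrite e eqxx.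
have [k0 [hk0 hk0']] := miss_one ht_inj.
have AH1 : A *m H = 1%:M.
  rewrite -(mulmxV hunit); apply/matrixP => a b; rewrite !mxE.
  rewrite (sum_reindex (f := fun l => A a l * H l b) ht_inj); last first.
    by move=> l hl /=; rewrite H0 // mulr0.
  by apply: eq_bigr => i _; rewrite HtE /colsubmx mxE.
have normH : norm1 H = norm1 X.
  rewrite /norm1 (sum_reindex (f := fun l => \sum_j `|H l j|) ht_inj); last first.
    by move=> l hl /=; rewrite big1 // => j _; rewrite H0 ?normr0.
  by apply: eq_bigr => i _; apply: eq_bigr => j _; rewrite HtE.
have main : forall H' : 'M[R]_(r.+1, r), A *m H' = 1%:M ->
         norm1 H <= (2 * r)%:R / (r.+1)%:R * norm1 H'.
  move=> H' hH'.
  have [r0|r1] : r = 0%N \/ (1 <= r)%N by lia.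
    subst r; rewrite /norm1 big1 ?mul0r // => i _; exact: big_ord0.
  pose z : 'cV[R]_(r.+1) := delta_mx k0 0 - H *m col k0 A.
  have Az : A *m z = 0 by rewrite mulmxBr -colE mulmxA AH1 mul1mx subrr.
  have zk0 : z k0 0 = 1.
    rewrite !mxE eqxx /= big1 ?subr0 // => i _; by rewrite H0 ?mul0r.
  clearbody z.
  pose w k := `|z k 0|.
  pose a k := \sum_j `|H' k j|.
  have Wpos : 0 < \sum_k w k.
    rewrite (bigD1 k0) //= /w zk0 normr1.
    have : 0 <= \sum_(i | i != k0) `|z i 0| by apply: sumr_ge0.
    lra.
  have [k [wk hk]] := @key R r.+1 w a (r1 : (2 <= r.+1)%N)
     (fun k => normr_ge0 _) (fun k => sumr_ge0 _ (fun j _ => normr_ge0 _)) Wpos.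
  have zk : z k 0 != 0 by rewrite -normr_gt0.
  pose Hk : 'M[R]_(r.+1, r) := \matrix_(i, j) (H' i j - z i 0 / z k 0 * H' k j).
  have HkE : Hk = H' - z *m ((z k 0)^-1 *: row k H').
    apply/matrixP => i j; rewrite !mxE big_ord1 !mxE.
    by rewrite mulrA [z i 0 / _]mulrC.
  have AHk : A *m Hk = 1%:M by rewrite HkE mulmxBr hH' mulmxA Az mul0mx subr0.
  have Hkk : forall j, Hk k j = 0.
    by move=> j; rewrite mxE divff // mul1r subrr.
  pose t' i := if t i == k then k0 else t i.
  have t'inj : injective t'.
    move=> i1 i2; rewrite /t'.
    case: eqP => e1; case: eqP => e2.
    - by move=> _; apply: ht_inj; rewrite e1 e2.
    - by move=> e; have := hk0 i2; rewrite -e eqxx.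
    - by move=> e; have := hk0 i1; rewrite e eqxx.
    - exact: ht_inj.
  have t'k : forall l, (forall i, t' i != l) -> l = k.
    move=> l hl; apply/eqP; apply/negPn/negP => lk.
    have [lk0|lk0] := eqVneq l k0.
      have kk0 : k != k0 by rewrite -lk0 eq_sym.
      have [i ti] := hk0' k kk0.
      by have := hl i; rewrite /t' ti eqxx lk0 eqxx.
    have [i ti] := hk0' l lk0.
    by have := hl i; rewrite /t' ti (negbTE lk) eqxx.
  have prodE : colsubmx t' A *m rowsub t' Hk = 1%:M.
    rewrite -AHk; apply/matrixP => a' b; rewrite !mxE.
    rewrite (sum_reindex (f := fun l => A a' l * Hk l b) t'inj); last first.
      by move=> l hl /=; rewrite (t'k l hl) Hkk mulr0.
    by apply: eq_bigr => i _; rewrite !mxE.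
  have [u1 _] := mulmx1_unit prodE.
  have invE : invmx (colsubmx t' A) = rowsub t' Hk.
    by rewrite -[invmx _]mulmx1 -prodE mulmxA mulVmx // mul1mx.
  have le1 : norm1 H <= norm1 Hk.
    rewrite normH; apply: le_trans (hmin _ t'inj u1) _; rewrite invE.
    rewrite /norm1 (sum_reindex (f := fun l => \sum_j `|Hk l j|) t'inj); last first.
      by move=> l hl /=; rewrite (t'k l hl) big1 // => j _; rewrite Hkk normr0.
    by rewrite le_eqVlt; apply/orP; left; apply/eqP; apply: eq_bigr => i _; apply: eq_bigr => j _; rewrite !mxE.
  have le2 : w k * norm1 Hk <= w k * norm1 H' + a k * (\sum_i w i - 2 * w k).
    have e1 : norm1 H' = \sum_i a i by [].
    have ent : forall i j, w k * `|Hk i j| <= w k * `|H' i j| + w i * `|H' k j|.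
      move=> i j; rewrite /w -!normrM mxE.
      have -> : z k 0 * (H' i j - z i 0 / z k 0 * H' k j) = z k 0 * H' i j - z i 0 * H' k j.
        by field.
      exact: ler_normB.
    have row : forall i, i != k -> w k * \sum_j `|Hk i j| <= w k * a i + w i * a k.
      move=> i _; rewrite /a !mulr_sumr -big_split /=.
      by apply: ler_sum => j _; apply: ent.
    rewrite e1 /norm1 mulr_sumr (bigD1 k) //= big1 ?mulr0 ?add0r; last first.
      by move=> j _; rewrite Hkk normr0.
    apply: le_trans (ler_sum _ row) _.
    rewrite big_split /= -mulr_sumr -mulr_suml.
    rewrite [\sum_i a i](bigD1 k) //= [\sum_i w i](bigD1 k) //=.
    lra.
  have N0 : 0 < (r.+1)%:R :> R by rewrite ltr0n.
  rewrite mulrAC ler_pdivlMr //.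
  have eN : (r.+1)%:R = r%:R + 1 :> R by rewrite -addn1 natrD.
  have e2 : (2 * r)%:R = 2 * r%:R :> R by rewrite natrM.
  rewrite e2; rewrite eN in hk N0.
  set W := \sum_i w i in le2 hk.
  set O := \sum_i a i in hk.
  have eO : norm1 H' = O by [].
  rewrite eO in le2 *.
  have h3 : w k * (norm1 Hk * (r%:R + 1)) <= w k * (2 * r%:R * O).
    have := ler_pM2r N0; move=> hh.
    have le2' : w k * norm1 Hk * (r%:R + 1) <= (w k * O + a k * (W - 2 * w k)) * (r%:R + 1).
      by rewrite ler_pM2r.
    lra.
  rewrite ler_pM2l // in h3.
  have h4 : norm1 H * (r%:R + 1) <= norm1 Hk * (r%:R + 1) by rewrite ler_pM2r.
  lra.
split => //.
- by rewrite AH1 mul1mx.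
- by rewrite -mulmxA AH1 mulmx1.
- by rewrite AH1 trmx1.
move=> H' hH'; apply: main.
by rewrite -[A *m H']mulmx1 -AH1 mulmxA hH' AH1.
Qed.
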